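(* Let $\mathcal{P}=(|K|,V)$ be a polyhedral model. For all $x\in|K|$ and every SLCS$_\eta$ formula $\Phi$: $\mathcal{P},x\models\Phi$ (SLCS$_\eta$ semantics on polyhedral models) if and only if $\mathbb{F}(\mathcal{P}),\mathbb{F}(x)\models\mathcal{E}(\Phi)$ (SLCS$_\gamma$ semantics on poset models).
   Context: Fix a set PL of proposition letters. A simplex $\sigma\subseteq\mathbb{R}^m$ is the convex hull of $d+1$ affinely independent points $v_0,\dots,v_d$; its faces are the simplices spanned by nonempty subsets of its vertices. Its relative interior (cell) is $\tilde\sigma=\{\sum_i\lambda_iv_i:\lambda_i\in(0,1],\sum_i\lambda_i=1\}$. A simplicial complex $K$ is a finite set of simplices in $\mathbb{R}^m$ closed under faces, any two of which intersect in a common face or in $\emptyset$. Its set of cells $\tilde K=\{\tilde\sigma:\sigma\in K\}$ is partially ordered by $\tilde\sigma_1\preceq\tilde\sigma_2$ iff $\tilde\sigma_1$ is contained in the topological closure of $\tilde\sigma_2$ (equivalently, $\sigma_1$ is a face of $\sigma_2$). The polyhedron $|K|$ is the union of the simplices of $K$ with the subspace topology; its cells partition $|K|$. A polyhedral model is $\mathcal{P}=(|K|,V)$ with $V:\mathrm{PL}\to\mathcal{P}(|K|)$ such that each $V(p)$ is a union of cells. Its cell poset model is $\mathbb{F}(\mathcal{P})=(\tilde K,\preceq,\mathcal{V})$ with $\tilde\sigma\in\mathcal{V}(p)$ iff $\tilde\sigma\subseteq V(p)$; for $x\in|K|$, $\mathbb{F}(x)$ is the unique cell containing $x$. A topological path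 from $x$ is a continuous $\pi:[0,1]\to|K|$ with $\pi(0)=x$. In a poset $(W,\preceq)$ a $\pm$-path of length $\ell\ge2$ from $w$ is $\pi:\{0,\dots,\ell\}\to W$ with $\pi(0)=w$, consecutive elements comparable under $\preceq$, $\pi(0)\preceq\pi(1)$ and $\pi(\ell)\preceq\pi(\ell-1)$. Formulas: $\Phi::=p\mid\neg\Phi\mid\Phi_1\wedge\Phi_2\mid M(\Phi_1,\Phi_2)$, $M=\eta$ for SLCS$_\eta$, $M=\gamma$ for SLCS$_\gamma$. On polyhedral models: $x\models p$ iff $x\in V(p)$; $x\models\gamma(\Phi_1,\Phi_2)$ iff some topological path $\pi$ from $x$ has $\pi(1)\models\Phi_2$ and $\pi(r)\models\Phi_1$ for all $r\in(0,1)$; $x\models\eta(\Phi_1,\Phi_2)$ iff the same with $r\in[0,1)$. On poset models $(W,\preceq,\mathcal{V})$: $w\models p$ iff $w\in\mathcal{V}(p)$; $w\models\gamma(\Phi_1,\Phi_2)$ iff some $\pm$-path $\pi$ of length $\ell$ from $w$ has $\pi(\ell)\models\Phi_2$ and $\pi(i)\models\Phi_1$ for $0<i<\ell$; $w\models\eta(\Phi_1,\Phi_2)$ iff the same with $0\le i<\ell$. Negation and conjunction are standard. The encoding $\mathcal{E}$: $\mathcal{E}(p)=p$, $\mathcal{E}(\neg\Phi)=\neg\mathcal{E}(\Phi)$, $\mathcal{E}(\Phi_1\wedge\Phi_2)=\mathcal{E}(\Phi_1)\wedge\mathcal{E}(\Phi_2)$, $\mathcal{E}(\eta(\Phi_1,\Phi_2))=\mathcal{E}(\Phi_1)\wedge\gamma(\mathcal{E}(\Phi_1),\mathcal{E}(\Phi_2))$.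 *)

(* Defs.v *)
From HB Require Import structures.
From mathcomp Require Import all_boot all_order all_algebra.
From mathcomp Require Import all_classical all_reals all_analysis.

Set Implicit Arguments.
Unset Strict Implicit.
Unset Printing Implicit Defensive.

Import Order.TTheory GRing.Theory Num.Theory.
Import numFieldNormedType.Exports.
Local Open Scope ring_scope.
Local Open Scope classical_set_scope.

Inductive formE (PL : Type) : Type :=
  | EProp of PL
  | ENeg of formE PL
  | EAnd of formE PL & formE PL
  | EEta of formE PL & formE PL.

Inductive formG (PL : Type) : Type :=
  | GProp of PL
  | GNeg of formG PL
  | GAnd of formG PL & formG PL
  | GGamma of formG PL & formG PL.

Fixpoint enc (PL : Type) (phi : formE PL) : formG PL :=
  match phi with
  | EProp p => GProp p
  | ENeg f => GNeg (enc f)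
  | EAnd f g => GAnd (enc f) (enc g)
  | EEta f g => GAnd (enc f) (GGamma (enc f) (enc g))
  end.

(* pi : nat -> W is a +-path of length l from w (only pi 0 .. pi l matter) *)
Definition pm_path (W : Type) (le : W -> W -> Prop) (w : W) (l : nat)
    (pi : nat -> W) : Prop :=
  [/\ (2 <= l)%N, pi 0%N = w,
      (forall i, (i < l)%N -> le (pi i) (pi i.+1) \/ le (pi i.+1) (pi i)),
      le (pi 0%N) (pi 1%N) & le (pi l) (pi l.-1)].

Fixpoint psatG (PL W : Type) (le : W -> W -> Prop) (val : PL -> W -> Prop)
    (phi : formG PL) (w : W) : Prop :=
  match phi with
  | GProp p => val p w
  | GNeg f => ~ psatG le val f w
  | GAnd f g => psatG le val f w /\ psatG le val g w
  | GGamma f g => exists (l : nat) (pi : nat -> W),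
      [/\ pm_path le w l pi, psatG le val g (pi l) &
          forall i, (0 < i < l)%N -> psatG le val f (pi i)]
  end.

(* P is the polyhedron |K| (carrying the subspace topology of T); a
   topological path from x is a map [0,1] -> P, continuous w.r.t. the
   subspace topology, i.e. continuous into T with image in P. *)
Fixpoint tsatE (R : realType) (T : topologicalType) (PL : Type) (P : set T)
    (V : PL -> set T) (phi : formE PL) (x : T) : Prop :=
  match phi with
  | EProp p => V p x
  | ENeg f => ~ tsatE R P V f x
  | EAnd f g => tsatE R P V f x /\ tsatE R P V g x
  | EEta f g => exists pi : R -> T,
      [/\ {within `[0, 1], continuous (pi : R -> T)},
          (forall r : R, 0 <= r <= 1 -> P (pi r)),
          pi 0 = x,
          tsatE R P V g (pi 1) &
          forall r : R, 0 <= r < 1 -> tsatE R P V f (pi r)]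
  end.

(* A complex is given by a finite type Vt of vertex labels, their       *)
(* positions pos : Vt -> R^m, and the set K of vertex sets of simplices. *)

Section Simplicial.
Variables (R : realType) (m : nat) (Vt : finType) (pos : Vt -> 'rV[R]_m).

Definition simplex (s : {set Vt}) : set 'rV[R]_m :=
  [set x | exists lam : Vt -> R,
     [/\ forall v, v \in s -> 0 <= lam v,
         \sum_(v in s) lam v = 1 &
         x = \sum_(v in s) lam v *: pos v]].

Definition cell (s : {set Vt}) : set 'rV[R]_m :=
  [set x | exists lam : Vt -> R,
     [/\ forall v, v \in s -> 0 < lam v <= 1,
         \sum_(v in s) lam v = 1 &
         x = \sum_(v in s) lam v *: pos v]].

Definition aff_indep (s : {set Vt}) : Prop :=
  forall lam : Vt -> R,
    \sum_(v in s) lam v = 0 ->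
    \sum_(v in s) lam v *: pos v = 0 ->
    forall v, v \in s -> lam v = 0.

Definition is_simplicial_complex (K : {set {set Vt}}) : Prop :=
  [/\
      (forall s, s \in K -> s != finset.set0 /\ aff_indep s),
      (forall s (t : {set Vt}), s \in K -> t \subset s -> t != finset.set0 -> t \in K) &
      (forall s1 s2, s1 \in K -> s2 \in K ->
         simplex s1 `&` simplex s2 = set0 \/
         exists t : {set Vt}, [/\ t \in K, t != finset.set0, t \subset s1, t \subset s2 &
                       simplex s1 `&` simplex s2 = simplex t])].

Definition polyhedron (K : {set {set Vt}}) : set 'rV[R]_m :=
  [set x | exists2 s, s \in K & simplex s x].

Definition polyhedral_valuation (PL : Type) (K : {set {set Vt}})
    (V : PL -> set 'rV[R]_m) : Prop :=
  forall p, exists S : {set {set Vt}},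
    S \subset K /\ V p = [set x | exists2 s, s \in S & cell s x].

(* cells of K, indexed by the simplices of K *)
Definition cellW (K : {set {set Vt}}) := {s : {set Vt} | s \in K}.

Definition cell_le (K : {set {set Vt}}) (s t : cellW K) : Prop :=
  cell (sval s) `<=` closure (cell (sval t)).

Definition cell_val (PL : Type) (K : {set {set Vt}})
    (V : PL -> set 'rV[R]_m) (p : PL) (s : cellW K) : Prop :=
  cell (sval s) `<=` V p.

End Simplicial.

(* Main.v *)
Require Import Defs.
From HB Require Import structures.
From mathcomp Require Import all_boot all_order all_algebra.
From mathcomp Require Import all_classical all_reals all_analysis.
Import Order.TTheory GRing.Theory Num.Theory.
Import numFieldNormedType.Exports.
Local Open Scope ring_scope.
Local Open Scope classical_set_scope.
From mathcomp Require Import lra.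

Set Implicit Arguments.
Unset Strict Implicit.

Section Alg.
Variables (R : realType) (m : nat) (Vt : finType) (pos : Vt -> 'rV[R]_m).

Lemma pos_le1 (s : {set Vt}) (lam : Vt -> R) :
  (forall v, v \in s -> 0 <= lam v) -> \sum_(v in s) lam v = 1 ->
  forall v, v \in s -> lam v <= 1.
Proof.
move=> H0 H1 v vs; rewrite -H1 (bigD1 v) //= lerDl.
by apply: sumr_ge0 => i /andP[/H0].
Qed.

Definition ext (t : {set Vt}) (a : Vt -> R) := fun v => if v \in t then a v else 0.

Lemma sum_ext (s t : {set Vt}) (a : Vt -> R) : t \subset s ->
  \sum_(v in s) ext t a v = \sum_(v in t) a v.
Proof.
move=> ts; rewrite /ext -big_mkcondr /=; apply: eq_bigl => v.
by case vt: (v \in t); rewrite ?andbT ?andbF //; rewrite (fintype.subsetP ts).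
Qed.

Lemma sumZ_ext (s t : {set Vt}) (a : Vt -> R) : t \subset s ->
  \sum_(v in s) ext t a v *: pos v = \sum_(v in t) a v *: pos v.
Proof.
move=> ts; rewrite (eq_bigr (fun v => if v \in t then a v *: pos v else 0)); last first.
  by move=> v _; rewrite /ext; case: ifP => _ //; rewrite scale0r.
rewrite -big_mkcondr /=; apply: eq_bigl => v.
by case vt: (v \in t); rewrite ?andbT ?andbF //; rewrite (fintype.subsetP ts).
Qed.

Lemma coord_unique (s : {set Vt}) (a b : Vt -> R) : aff_indep pos s ->
  \sum_(v in s) a v = \sum_(v in s) b v ->
  \sum_(v in s) a v *: pos v = \sum_(v in s) b v *: pos v ->
  forall v, v \in s -> a v = b v.
Proof.
move=> Hs E1 E2 v vs; apply/eqP; rewrite -subr_eq0; apply/eqP.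
apply: (Hs (fun v => a v - b v)) => //.
  by rewrite sumrB E1 subrr.
rewrite (eq_bigr (fun v => a v *: pos v - b v *: pos v)); last by move=> i _; rewrite scalerBl.
by rewrite sumrB E2 subrr.
Qed.

Lemma cell_simplex s : cell pos s `<=` simplex pos s.
Proof.
move=> x [lam [H1 H2 H3]]; exists lam; split => // v /H1 /andP[/ltW].
by [].
Qed.

Lemma key (K : {set {set Vt}}) (s t : {set Vt}) (x : 'rV[R]_m) :
  is_simplicial_complex pos K -> s \in K -> t \in K ->
  cell pos s x -> simplex pos t x -> s \subset t.
Proof.
move=> [Hs _ Hint] sK tK xc xt.
have xs := cell_simplex xc.
case: (Hint s t sK tK) => [E|[u [uK _ us ut E]]].
  by have : (simplex pos s `&` simplex pos t) x by []; rewrite E.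
have : (simplex pos s `&` simplex pos t) x by []; rewrite E => -[b [b0 b1 bx]].
case: xc => a [a0 a1 ax].
have Hc := coord_unique (a := a) (b := ext u b) (proj2 (Hs s sK)).
apply: (fintype.subset_trans _ ut); apply/fintype.subsetP => v vs.
have := Hc _ _ v vs; rewrite sum_ext // sumZ_ext // -ax -bx a1 b1 /ext.
case: (v \in u) => // /(_ erefl erefl) av0.
by have := a0 v vs; rewrite av0 ltxx.
Qed.

Lemma cell_unique (K : {set {set Vt}}) (s t : {set Vt}) (x : 'rV[R]_m) :
  is_simplicial_complex pos K -> s \in K -> t \in K ->
  cell pos s x -> cell pos t x -> s = t.
Proof.
move=> HK sK tK xs xt; apply/eqP; rewrite finset.eqEsubset.
by rewrite (key HK sK tK xs (cell_simplex xt)) (key HK tK sK xt (cell_simplex xs)).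
Qed.

Lemma simplex_cell (K : {set {set Vt}}) (t : {set Vt}) (x : 'rV[R]_m) :
  is_simplicial_complex pos K -> t \in K -> simplex pos t x ->
  exists2 s, s \in K & cell pos s x /\ s \subset t.
Proof.
move=> [Hs Hface _] tK [lam [l0 l1 lx]].
pose s := [set v in t | lam v != 0].
have st : s \subset t by apply/fintype.subsetP => v; rewrite inE => /andP[].
have es : forall v, v \in t -> v \notin s -> lam v = 0.
  by move=> v vt; rewrite inE vt /= negbK => /eqP.
have sum_s : forall F : Vt -> 'rV[R]_m, (forall v, lam v = 0 -> F v = 0) ->
    \sum_(v in t) F v = \sum_(v in s) F v.
  move=> F HF; rewrite (big_setID s) /= (finset.setIidPr st) [X in _ + X]big1 ?addr0 //.
  by move=> v; rewrite inE => /andP[vs vt]; apply: HF; apply: es.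
have sum_sR : \sum_(v in t) lam v = \sum_(v in s) lam v.
  rewrite (big_setID s) /= (finset.setIidPr st) [X in _ + X]big1 ?addr0 //.
  by move=> v; rewrite inE => /andP[vs vt]; apply: es.
have sne : s != finset.set0.
  apply/negP => /eqP s0; move: l1; rewrite sum_sR s0 finset.big_set0 => /eqP.
  by rewrite eq_sym oner_eq0.
exists s; first by apply: Hface tK st sne.
split => //; exists lam; split.
- move=> v; rewrite inE => /andP[vt lv]; rewrite lt_neqAle eq_sym lv l0 //=.
  by apply: pos_le1 l0 l1 v vt.
- by rewrite -sum_sR.
- by rewrite lx; apply: sum_s => v ->; rewrite scale0r.
Qed.

End Alg.

Set Implicit Arguments.
Unset Strict Implicit.

Section Alg2.
Variables (R : realType) (m : nat) (Vt : finType) (pos : Vt -> 'rV[R]_m).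

Lemma seg_cell (s t : {set Vt}) (x y : 'rV[R]_m) (r : R) :
  s \subset t -> cell pos s x -> cell pos t y -> 0 < r <= 1 ->
  cell pos t ((1 - r) *: x + r *: y).
Proof.
move=> st [a [a0 a1 ax]] [b [b0 b1 bx]] /andP[r0 r1].
pose c v := (1 - r) * ext s a v + r * b v.
have c0 : forall v, v \in t -> 0 < c v.
  move=> v vt; rewrite /c ltr_wpDl //; last by rewrite mulr_gt0 // (andP (b0 v vt)).1.
  rewrite mulr_ge0 // ?subr_ge0 // /ext; case: ifP => // /a0 /andP[/ltW].
  by [].
have c1 : \sum_(v in t) c v = 1.
  rewrite /c big_split /= -!mulr_sumr sum_ext // a1 b1 !mulr1.
  by rewrite subrK.
exists c; split => //.
- by move=> v vt; rewrite c0 //= (pos_le1 (fun v vt => ltW (c0 v vt)) c1).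
- rewrite ax bx -(sumZ_ext pos a st) !scaler_sumr -big_split /=.
  by apply: eq_bigr => v _; rewrite !scalerA -scalerDl.
Qed.

Lemma cell_nonempty (t : {set Vt}) : t != finset.set0 -> exists x, cell pos t x.
Proof.
move=> tn; have ct : (0 < #|t|)%N by rewrite card_gt0.
have nz : (#|t|%:R : R) != 0 by rewrite pnatr_eq0 -lt0n.
exists (\sum_(v in t) #|t|%:R^-1 *: pos v), (fun _ => #|t|%:R^-1); split => //.
  move=> v vt; rewrite invr_gt0 ltr0n ct /= invf_le1 ?ltr0n // ler1n //.
by rewrite sumr_const -[_ *+ _]mulr_natr mulVf.
Qed.

End Alg2.

Set Implicit Arguments.
Unset Strict Implicit.

Lemma cont_sum (R : realType) (T : topologicalType) (W : normedModType R) (I : Type)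
  (r : seq I) (P : pred I) (F : I -> T -> W) :
  (forall i, continuous (F i)) -> continuous (fun x => \sum_(i <- r | P i) F i x).
Proof.
move=> HF; elim: r => [|a r IH].
  rewrite (_ : (fun x => _) = fun _ => 0); first (exact: (@cst_continuous T W 0)).
  by apply: funext => x; rewrite big_nil.
rewrite (_ : (fun x => _) = (fun x => (if P a then F a x else 0) + \sum_(i <- r | P i) F i x)).
  move=> x; apply: (@continuousD R W T (fun x => if P a then F a x else 0)) => //.
  - by case: (P a) => //; [exact: HF | exact: cst_continuous].
  - exact: IH.
by apply: funext => x; rewrite big_cons; case: (P a) => //; rewrite add0r.
Qed.

Section Topo.
Variables (R : realType) (m : nat) (Vt : finType) (pos : Vt -> 'rV[R]_m).

Lemma simplex_closed (t : {set Vt}) : closed (simplex pos t).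
Proof.
pose G := fun w : 'rV[R]_#|Vt| => \sum_(v in t) w ord0 (enum_rank v).
pose F := fun w : 'rV[R]_#|Vt| => \sum_(v in t) w ord0 (enum_rank v) *: pos v.
pose Box := [set w : 'rV[R]_#|Vt| | forall i, `[(0:R), 1]%classic (w ord0 i)].
pose L := Box `&` [set w | G w = 1].
have Gc : continuous G.
  by apply: cont_sum => v; exact: coord_continuous.
have Fc : continuous F.
  apply: cont_sum => v w; apply: continuousZr_tmp; exact: coord_continuous.
have cL : compact L.
  apply: compact_closedI.
    by apply: (@rV_compact _ _ (fun=> `[(0:R), 1]%classic)) => i; exact: segment_compact.
  rewrite (_ : [set w | G w = 1] = G @^-1` [set y | y = 1]) //.
  by apply: preimage_closed; [move=> w _; exact: Gc | exact: closed_eq].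
have -> : simplex pos t = F @` L.
  apply/seteqP; split.
  - move=> x [lam [l0 l1 lx]].
    exists (\row_i (if enum_val i \in t then lam (enum_val i) else 0)).
      split.
      + move=> i; rewrite mxE /= in_itv /=; case: ifP => it; last by rewrite lexx ler01.
        by rewrite l0 // (pos_le1 l0 l1).
      + by rewrite /G /=; under eq_bigr do rewrite mxE enum_rankK; rewrite -l1;
          apply: eq_bigr => v ->.
    rewrite lx /F; apply: eq_bigr => v vt; rewrite mxE enum_rankK vt //.
  - move=> x [w [wB wG] <-]; exists (fun v => w ord0 (enum_rank v)); split => //.
    move=> v _; have := wB (enum_rank v); rewrite /= in_itv /= => /andP[].
    by [].
apply: compact_closed; first exact: norm_hausdorff.
apply: continuous_compact => //; exact: continuous_subspaceT.
Qed.

End Topo.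

Set Implicit Arguments.
Unset Strict Implicit.

Lemma nbhs_ex (R : realType) (W : normedModType R) (x : W) (B : set W) :
  nbhs x B -> exists2 e : R, 0 < e & forall z, `|x - z| < e -> B z.
Proof. by move=> /nbhs_normP [e e0 H]; exists e => // z; apply: H. Qed.

Lemma ex_nbhs (R : realType) (W : normedModType R) (x : W) (B : set W) :
  (exists2 e : R, 0 < e & forall z, `|x - z| < e -> B z) -> nbhs x B.
Proof. by move=> [e e0 H]; apply/nbhs_normP; exists e => // z; apply: H. Qed.

Section Topo2.
Variables (R : realType) (m : nat) (Vt : finType) (pos : Vt -> 'rV[R]_m).

Lemma cl_cell (t : {set Vt}) : closure (cell pos t) `<=` simplex pos t.
Proof.
move=> x /(closureS (cell_simplex (pos:=pos) (s:=t))).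
by rewrite -(proj1 (closure_id _) (simplex_closed (pos:=pos) (t:=t))).
Qed.

Lemma sub_closure (s t : {set Vt}) (x : 'rV[R]_m) : t != finset.set0 ->
  s \subset t -> cell pos s x -> closure (cell pos t) x.
Proof.
move=> tn st xs B /nbhs_ex [e e0 HB].
have [y yt] := cell_nonempty pos tn.
set d := `|x - y|.
have d0 : 0 <= d by exact: normr_ge0.
pose r := e / (d + e).
have de0 : 0 < d + e by rewrite ltr_wpDl.
have r0 : 0 < r by rewrite divr_gt0.
have r1 : r <= 1 by rewrite ler_pdivrMr // mul1r lerDr.
exists ((1 - r) *: x + r *: y); split; first by apply: seg_cell st xs yt _; rewrite r0 r1.
apply: HB.
rewrite (_ : x - _ = r *: (x - y)); last first.
  by rewrite scalerBl scale1r scalerBr opprD opprB addrA addrC addrA addrC addrA addrAC subrK.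
rewrite normrZ gtr0_norm // -/d /r mulrAC ltr_pdivrMr // ltr_pM2l //.
by rewrite ltrDl.
Qed.

Lemma cell_le_subset (K : {set {set Vt}}) (s t : cellW K) :
  is_simplicial_complex pos K ->
  cell_le pos s t <-> sval s \subset sval t.
Proof.
move=> HK; have HK' := HK; case: HK' => [Hs _ _].
case: s => s sK; case: t => t tK /=; split.
  move=> H; have [x xs] := cell_nonempty pos (proj1 (Hs s sK)).
  exact: key HK sK tK xs (cl_cell (H x xs)).
move=> st x xs; exact: sub_closure (proj1 (Hs t tK)) st xs.
Qed.

Lemma open_star (K : {set {set Vt}}) (s : {set Vt}) (x : 'rV[R]_m) :
  is_simplicial_complex pos K -> s \in K -> cell pos s x ->
  exists2 e : R, 0 < e & forall y t, `|x - y| < e -> t \in K -> cell pos t y ->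
    s \subset t.
Proof.
move=> HK sK xs.
pose U := \big[setU/set0]_(t <- enum [set t in K | ~~ (s \subset t)]) simplex pos t.
have cU : closed U by apply: closed_bigsetU => t _; exact: simplex_closed.
have xU : (~` U) x.
  rewrite /U -bigcup_seq => -[t] /=; rewrite mem_enum inE => /andP[tK nst] xt.
  by move/negP: nst; apply; exact: key HK sK tK xs xt.
have : nbhs x (~` U) by move: cU; rewrite -openC => oU; exact: open_nbhs_nbhs.
move=> /nbhs_ex [e e0 He]; exists e => // y t xy tK yt.
apply/negPn/negP => nst; apply: (He y xy).
rewrite /U -bigcup_seq; exists t => /=; first by rewrite mem_enum inE tK.
exact: cell_simplex.
Qed.

End Topo2.

Set Implicit Arguments.
Unset Strict Implicit.

Lemma within_contP (R : realType) (W : normedModType R) (A : set R) (f : R -> W) :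
  {within A, continuous f} <->
  (forall t, A t -> forall e : R, 0 < e -> exists2 d : R, 0 < d &
     forall u, A u -> `|t - u| < d -> `|f t - f u| < e).
Proof.
rewrite subspace_continuousP; split.
  move=> H t At e e0; have /cvgrPdist_lt /(_ e e0) := H t At.
  rewrite near_withinE => /nbhs_ex [d d0 Hd]; exists d => // u Au tu.
  exact: Hd.
move=> H t At; apply/cvgrPdist_lt => e e0; rewrite near_withinE.
have [d d0 Hd] := H t At e e0; apply: ex_nbhs; exists d => // u tu Au.
exact: Hd.
Qed.

Set Implicit Arguments.
Unset Strict Implicit.

Definition Reach (R : realType) (m : nat) (P : set 'rV[R]_m) (Q : 'rV[R]_m -> Prop) (x z : 'rV[R]_m) := exists pi : R -> 'rV[R]_m,
  [/\ {within `[0, 1], continuous pi},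
      (forall r : R, 0 <= r <= 1 -> P (pi r)),
      pi 0 = x, pi 1 = z &
      forall r : R, 0 <= r < 1 -> Q (pi r)].

Lemma itv01 (R : realType) (u : R) : (`[(0:R), 1]%classic u) <-> 0 <= u <= 1.
Proof. by rewrite /= in_itv. Qed.

Lemma seg_cont (R : realType) (m : nat) (x z : 'rV[R]_m) :
  {within `[0, 1], continuous (fun r : R => (1 - r) *: x + r *: z)}.
Proof.
apply: continuous_subspaceT => r.
apply: (@continuousD R _ R (fun r : R => (1 - r) *: x) (fun r : R => r *: z)).
  apply: continuousZr_tmp; apply: continuousB; [exact: cvg_cst | exact: cvg_id].
apply: continuousZr_tmp; exact: cvg_id.
Qed.

Lemma concat_reach (R : realType) (m : nat) (P : set 'rV[R]_m) (Q : 'rV[R]_m -> Prop) x y z :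
  Reach P Q x y -> Reach P Q y z -> Reach P Q x z.
Proof.
move=> [p1 [c1 P1 a1 b1 Q1]] [p2 [c2 P2 a2 b2 Q2]].
pose pi := fun r : R => if r <= 2^-1 then p1 (2 * r) else p2 (2 * r - 1).
have h2 : (2:R)^-1 < 1 by lra.
exists pi; split.
- have -> : `[(0:R), 1]%classic = `[0, 2^-1]%classic `|` `[2^-1, 1]%classic.
    apply/seteqP; split => u /=; rewrite !in_itv /=.
      move=> /andP[u0 u1]; case: (boolP (u <= 2^-1)) => hu; [left | right]; rewrite ?u0 ?hu ?u1 ?andbT //; lra.
    by case=> /andP[u0 u1]; apply/andP; split; lra.
  apply: withinU_continuous; [exact: itv_closed | exact: itv_closed | |].
  + apply/within_contP => t; rewrite /= in_itv /= => /andP[t0 t1] e e0.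
    have t2 : 0 <= 2 * t <= 1 by apply/andP; split; lra.
    move/within_contP: c1 => /(_ (2 * t) (proj2 (itv01 _) t2) e e0) [d d0 Hd].
    exists (d / 2); first by rewrite divr_gt0.
    move=> u; rewrite /= in_itv /= => /andP[u0 u1] tu.
    rewrite /pi t1 u1; apply: Hd.
      by apply/itv01; apply/andP; split; lra.
    rewrite -mulrBr normrM gtr0_norm //; lra.
  + apply/within_contP => t; rewrite /= in_itv /= => /andP[t0 t1] e e0.
    have t2 : 0 <= 2 * t - 1 <= 1 by apply/andP; split; lra.
    move/within_contP: c2 => /(_ (2 * t - 1) (proj2 (itv01 _) t2) e e0) [d d0 Hd].
    exists (d / 2); first by rewrite divr_gt0.
    move=> u; rewrite /= in_itv /= => /andP[u0 u1] tu.
    have E : forall v, 2^-1 <= v -> pi v = p2 (2 * v - 1).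
      move=> v hv; rewrite /pi; case: ifP => // hv2.
      have -> : v = 2^-1 by apply/eqP; rewrite eq_le hv hv2.
      by rewrite (_ : 2 * 2^-1 = 1 :> R) ?subrr ?b1 ?a2 // divff.
    rewrite !E //; apply: Hd.
      by apply/itv01; apply/andP; split; lra.
    rewrite opprB addrA addrNK -mulrBr normrM gtr0_norm //; lra.
- move=> r /andP[r0 r1]; rewrite /pi; case: ifP => hr.
    by apply: P1; apply/andP; split; lra.
  by move/negbT: hr; rewrite -ltNge => hr; apply: P2; apply/andP; split; lra.
- by rewrite /pi invr_ge0 ler0n mulr0.
- rewrite /pi (_ : (1 <= 2^-1) = false); last by apply/negbTE; rewrite -ltNge.
  by rewrite -b2; congr (_ _); lra.
- move=> r /andP[r0 r1]; rewrite /pi; case: ifP => hr.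
    case: (ltP (2 * r) 1) => h.
      by apply: Q1; apply/andP; split; lra.
    have -> : 2 * r = 1 by lra.
    by rewrite b1 -a2; apply: Q2; rewrite lexx ltr01.
  by move/negbT: hr; rewrite -ltNge => hr; apply: Q2; apply/andP; split; lra.
Qed.

Set Implicit Arguments.
Unset Strict Implicit.

Lemma seg_down (R : realType) (m : nat) (Vt : finType) (pos : Vt -> 'rV[R]_m)
  (a b : {set Vt}) x z (r : R) : b \subset a -> cell pos a x -> cell pos b z ->
  0 <= r < 1 -> cell pos a ((1 - r) *: x + r *: z).
Proof.
move=> ba xa zb /andP[r0 r1].
have := seg_cell ba zb xa (r := 1 - r).
rewrite (_ : 1 - (1 - r) = r); last by rewrite opprB addrC subrK.
rewrite [X in cell _ _ X]addrC.
by apply; apply/andP; split; lra.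
Qed.

Lemma seg_reach (R : realType) (m : nat) (Vt : finType) (pos : Vt -> 'rV[R]_m)
  (K : {set {set Vt}}) (Q : 'rV[R]_m -> Prop) (a b : {set Vt}) x z :
  a \in K -> b \in K -> cell pos a x -> cell pos b z ->
  (a \subset b /\ (forall y, cell pos a y -> Q y) /\ (forall y, cell pos b y -> Q y)) \/
  (b \subset a /\ (forall y, cell pos a y -> Q y)) ->
  Reach (polyhedron pos K) Q x z.
Proof.
move=> aK bK xa zb H.
have Pa : forall y, cell pos a y -> polyhedron pos K y.
  by move=> y ya; exists a => //; exact: cell_simplex.
have Pb : forall y, cell pos b y -> polyhedron pos K y.
  by move=> y yb; exists b => //; exact: cell_simplex.
exists (fun r : R => (1 - r) *: x + r *: z); split.
- exact: seg_cont.
- move=> r /andP[r0 r1].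
  case: H => [[ab _]|[ba _]].
    have [->|rp] := eqVneq r 0; first by rewrite subr0 scale1r scale0r addr0; exact: Pa.
    apply: Pb; apply: seg_cell ab xa zb _; apply/andP; split => //.
    by rewrite lt_neqAle eq_sym rp.
  have [->|rp] := eqVneq r 1; first by rewrite subrr scale0r scale1r add0r; exact: Pb.
  apply: Pa; apply: seg_down ba xa zb _; apply/andP; split => //.
  by rewrite lt_neqAle rp.
- by rewrite subr0 scale1r scale0r addr0.
- by rewrite subrr scale0r scale1r add0r.
- move=> r /andP[r0 r1].
  case: H => [[ab [Qa Qb]]|[ba Qa]].
    have [->|rp] := eqVneq r 0; first by rewrite subr0 scale1r scale0r addr0; exact: Qa.
    apply: Qb; apply: seg_cell ab xa zb _; apply/andP; split; last exact: ltW.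
    by rewrite lt_neqAle eq_sym rp.
  by apply: Qa; apply: seg_down ba xa zb _; apply/andP; split.
Qed.

Set Implicit Arguments.
Unset Strict Implicit.

Lemma conn_ind (R : realType) (A : set R) (d : R -> R) :
  A 0 -> (forall t, 0 <= t < 1 -> 0 < d t) ->
  (forall t u, 0 <= t < 1 -> 0 <= u < 1 -> A t -> `|t - u| < d t -> A u) ->
  (forall t u, 0 <= t < 1 -> 0 <= u < 1 -> A u -> `|t - u| < d t -> A t) ->
  forall t, 0 <= t < 1 -> A t.
Proof.
move=> A0 d0 Hup Hdn.
pose C := [set t : R | 0 <= t < 1].
have cC : connected C.
  apply/connected_intervalP => x y /andP[x0 x1] /andP[y0 y1] z /andP[xz zy].
  by rewrite /C /=; apply/andP; split; lra.
have bE : forall t r u, ball t r u <-> `|t - u| < r.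
  by move=> t r u; rewrite -ball_normE.
suff : A `&` C = C by move=> E t tC; have : C t by []; rewrite -E => -[].
apply: cC.
- by exists 0; split => //; rewrite /C /= lexx ltr01.
- exists (\bigcup_(t in A `&` C) ball t (d t)).
    by apply: bigcup_open => t _; exact: ball_open.
  apply/seteqP; split.
    move=> t [At Ct]; split => //; exists t => //; apply/bE.
    by rewrite subrr normr0; apply: d0.
  move=> u [Cu [t [At Ct] /bE tu]]; split => //; exact: Hup Ct Cu At tu.
- exists (~` \bigcup_(t in C `\` A) ball t (d t)).
    by rewrite closedC; apply: bigcup_open => t _; exact: ball_open.
  apply/seteqP; split.
    move=> t [At Ct]; split => //; move=> [u [Cu nAu] /bE ut].
    by apply: nAu; apply: Hdn Cu Ct At ut.
  move=> u [Cu nU]; split => //; apply: contrapT => nAu; apply: nU.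
  exists u => //; apply/bE; rewrite subrr normr0; exact: d0.
Qed.

Set Implicit Arguments.
Unset Strict Implicit.

Lemma star_path (R : realType) (m : nat) (Vt : finType) (pos : Vt -> 'rV[R]_m)
  (K : {set {set Vt}}) (pi : R -> 'rV[R]_m) (t : R) :
  is_simplicial_complex pos K ->
  {within `[0, 1], continuous pi} ->
  (forall r : R, 0 <= r <= 1 -> polyhedron pos K (pi r)) ->
  0 <= t <= 1 ->
  exists2 d : R, 0 < d & forall u c0 c, 0 <= u <= 1 -> `|t - u| < d ->
    c0 \in K -> c \in K -> cell pos c0 (pi t) -> cell pos c (pi u) -> c0 \subset c.
Proof.
move=> HK cpi Ppi t01.
have [c1 c1K /(simplex_cell HK c1K) [c0' c0K [c0x _]]] := Ppi t t01.
have [e e0 He] := open_star HK c0K c0x.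
have [d d0 Hd] := (proj1 (within_contP _ _) cpi) t (proj2 (itv01 _) t01) e e0.
exists d => // u c0 c u01 tu c0'K cK c0t cu.
rewrite (cell_unique HK c0'K c0K c0t c0x).
apply: (He (pi u)) => //; apply: Hd => //; exact/itv01.
Qed.

Definition Ch (W : Type) (le : W -> W -> Prop) (F : W -> Prop) (s c : W) :=
  exists l (p : nat -> W), [/\ p 0%N = s, p l = c,
    (forall i, (i < l)%N -> le (p i) (p i.+1) \/ le (p i.+1) (p i)) &
    (forall i, (i <= l)%N -> F (p i))].

Lemma Ch0 (W : Type) (le : W -> W -> Prop) (F : W -> Prop) s : F s -> Ch le F s s.
Proof. by move=> Fs; exists 0%N, (fun _ => s); split => // i _ ; rewrite ltn0. Qed.

Lemma Ch_ext (W : Type) (le : W -> W -> Prop) (F : W -> Prop) s c c' :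
  Ch le F s c -> le c c' \/ le c' c -> F c' -> Ch le F s c'.
Proof.
move=> [l [p [p0 pl pc pF]]] cc' Fc'.
exists l.+1, (fun i => if (i <= l)%N then p i else c'); split => //.
- by rewrite ltnn.
- move=> i il1; have [->|il] : i = l \/ (i < l)%N.
      by move: il1; rewrite ltnS leq_eqVlt => /orP[/eqP|]; [left|right].
    by rewrite leqnn ltnn pl.
  by rewrite ltnW // il; apply: pc.
- by move=> i _; case: ifP => [/pF|_].
Qed.

Lemma Ch_path (W : Type) (le : W -> W -> Prop) (F G : W -> Prop) s c c1 :
  (forall w, le w w) -> Ch le F s c -> le c1 c -> G c1 ->
  exists l (pi : nat -> W),
    [/\ pm_path le s l pi, G (pi l) & forall i, (0 < i < l)%N -> F (pi i)].
Proof.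
move=> refl [l [p [p0 pl pc pF]]] c1c Gc1.
pose q i := if i == 0%N then s else if (i <= l.+1)%N then p i.-1 else c1.
exists l.+2, q; split.
- split => //.
  + move=> i; case: i => [|i] hi; first by rewrite /q /= -p0; left; apply: refl.
    have il : (i <= l)%N by move: hi; rewrite !ltnS.
    rewrite /q /= !ltnS il; case: (ltnP i l) => il'.
      by apply: pc.
    have ei : i = l by apply/eqP; rewrite eqn_leq il il'.
    by rewrite ei pl; right.
  + by rewrite /q /= -p0; apply: refl.
  + by rewrite /q /= ltnn leqnn pl.
- by rewrite /q /= ltnn.
- move=> [|i] // /andP[_ il]; have il2 : (i <= l)%N by move: il; rewrite !ltnS.
  by rewrite /q /= ltnS il2; apply: pF.
Qed.

Set Implicit Arguments.
Unset Strict Implicit.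

Lemma path_reach (R : realType) (m : nat) (Vt : finType) (pos : Vt -> 'rV[R]_m)
  (K : {set {set Vt}}) (Q : 'rV[R]_m -> Prop) (s : cellW K) x l (pi : nat -> cellW K) :
  is_simplicial_complex pos K -> cell pos (sval s) x ->
  pm_path (@cell_le R m Vt pos K) s l pi ->
  (forall i, (i < l)%N -> forall y, cell pos (sval (pi i)) y -> Q y) ->
  exists z, cell pos (sval (pi l)) z /\ Reach (polyhedron pos K) Q x z.
Proof.
move=> HK xs [l2 p0 pc p01 pl] HQ.
have HK' := HK; case: HK' => [Hs _ _].
have : forall i, exists y, cell pos (sval (pi i)) y /\ (i = 0%N -> y = x).
  case=> [|i]; first by exists x; rewrite p0.
  have [z zc] := cell_nonempty pos (proj1 (Hs _ (valP (pi i.+1)))).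
  by exists z; split.
move=> /choice [y Hy].
have seg : forall j, (j < l)%N -> Reach (polyhedron pos K) Q (y j) (y j.+1).
  move=> j jl; have [yj _] := Hy j; have [yj1 _] := Hy j.+1.
  have Qj := HQ j jl.
  case: (boolP (sval (pi j.+1) \subset sval (pi j))) => sub.
    by apply: seg_reach (valP (pi j)) (valP (pi j.+1)) yj yj1 _; right.
  have sub2 : sval (pi j) \subset sval (pi j.+1).
    case: (pc j jl) => /(cell_le_subset _ _ HK) // H.
    by rewrite H in sub.
  have jl1 : (j.+1 < l)%N.
    rewrite ltn_neqAle jl andbT; apply/eqP => ejl.
    move: pl; rewrite -ejl /= => /(cell_le_subset _ _ HK) H.
    by rewrite H in sub.
  apply: seg_reach (valP (pi j)) (valP (pi j.+1)) yj yj1 _; left; split => //.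
  by split => //; apply: HQ.
have : forall j, (0 < j <= l)%N -> Reach (polyhedron pos K) Q x (y j).
  elim=> [|j IH] //; rewrite ltnS => /andP[_ jl].
  case: j IH jl => [|j] IH jl.
    by have := seg 0%N jl; rewrite (proj2 (Hy 0%N)).
  apply: concat_reach (seg _ jl); apply: IH; apply/andP; split => //; exact: ltnW.
move=> /(_ l) H; exists (y l); split; first exact: (proj1 (Hy l)).
by apply: H; rewrite leqnn andbT (leq_trans _ l2).
Qed.

Set Implicit Arguments.
Unset Strict Implicit.

Lemma main_ind (R : realType) (m : nat) (PL : Type) (Vt : finType)
    (pos : Vt -> 'rV[R]_m) (K : {set {set Vt}}) (V : PL -> set 'rV[R]_m) :
  is_simplicial_complex pos K ->
  polyhedral_valuation pos K V ->
  forall phi : formE PL, forall (x : 'rV[R]_m) (s : cellW K), cell pos (sval s) x ->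
    tsatE R (polyhedron pos K) V phi x <->
    psatG (@cell_le R m Vt pos K) (cell_val pos V) (enc phi) s.
Proof.
move=> HK HV phi; elim: phi => [p | f IH | f IHf g IHg | f IHf g IHg] x s xs /=.
- split.
    move=> Vx; have [S [SK ES]] := HV p; rewrite /cell_val => y ys.
    rewrite ES in Vx *; case: Vx => s' s'S xs'; exists s' => //.
    have s'K : s' \in K := fintype.subsetP SK _ s'S.
    by rewrite (cell_unique HK s'K (valP s) xs' xs).
  by rewrite /cell_val => H; exact: H x xs.
- by split => H H'; apply: H; apply/(IH x s xs).
- by rewrite (IHf x s xs) (IHg x s xs).
- pose le := @cell_le R m Vt pos K.
  pose Pf := psatG le (cell_val pos V) (enc f).
  have cellof : forall y, polyhedron pos K y -> exists c : cellW K, cell pos (sval c) y.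
    move=> y [t tK /(simplex_cell HK tK) [c cK [cc _]]].
    by exists (exist _ c cK).
  have refl : forall w : cellW K, le w w by move=> w; exact: subset_closure.
  split.
  + move=> [p [cp pP p0 pg pf]].
    have Hf : Pf s by apply/(IHf x s xs); rewrite -p0; apply: pf; rewrite lexx ltr01.
    split => //.
    have : forall t : R, exists d : R, 0 <= t <= 1 -> 0 < d /\
        forall u c0 c, 0 <= u <= 1 -> `|t - u| < d ->
        c0 \in K -> c \in K -> cell pos c0 (p t) -> cell pos c (p u) -> c0 \subset c.
      move=> t; case: (boolP (0 <= t <= 1)) => t01; last by exists 1.
      have [d d0 Hd] := star_path HK cp pP t01.
      by exists d => _; split.
    move=> /choice [d Hd].
    pose A := fun t => exists c : cellW K, cell pos (sval c) (p t) /\ Ch le Pf s c.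
    have H01 : forall t : R, 0 <= t < 1 -> 0 <= t <= 1.
      by move=> t /andP[t0 t1]; rewrite t0 ltW.
    have HA : forall t, 0 <= t < 1 -> A t.
      apply: (@conn_ind R A d).
      - by exists s; split; [rewrite p0 | apply: Ch0].
      - by move=> t /H01 /Hd [].
      - move=> t u t01 u01 [c [ct Chc]] tu.
        have [cu cuu] := cellof _ (pP u (H01 _ u01)).
        exists cu; split => //; apply: Ch_ext Chc _ _.
          left; apply/(cell_le_subset _ _ HK).
          exact: (proj2 (Hd t (H01 _ t01))) u _ _ (H01 _ u01) tu (valP c) (valP cu) ct cuu.
        by apply/(IHf _ cu cuu); apply: pf.
      - move=> t u t01 u01 [cu [cuu Chu]] tu.
        have [c ct] := cellof _ (pP t (H01 _ t01)).
        exists c; split => //; apply: Ch_ext Chu _ _.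
          right; apply/(cell_le_subset _ _ HK).
          exact: (proj2 (Hd t (H01 _ t01))) u _ _ (H01 _ u01) tu (valP c) (valP cu) ct cuu.
        by apply/(IHf _ c ct); apply: pf.
    have d1 : 0 <= (1:R) <= 1 by rewrite ler01 lexx.
    have [d10 Hd1] := Hd 1 d1.
    have [u [u01 u1]] : exists u : R, 0 <= u < 1 /\ `|1 - u| < d 1.
      case: (boolP (d 1 <= 1)) => hd.
        exists (1 - d 1 / 2); split; first by apply/andP; split; lra.
        rewrite ger0_norm; lra.
      exists (2^-1); split; first by apply/andP; split; lra.
      rewrite ger0_norm; lra.
    have [cu [cuu Chu]] := HA u u01.
    have [c1 c1c] := cellof _ (pP 1 d1).
    apply: (Ch_path refl Chu).
      apply/(cell_le_subset _ _ HK).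
      exact: Hd1 u _ _ (H01 _ u01) u1 (valP c1) (valP cu) c1c cuu.
    exact/(IHg _ c1 c1c).
  + move=> [Hf [l [pi [Hp Hg Hi]]]].
    have Qc : forall i, (i < l)%N -> forall y, cell pos (sval (pi i)) y -> tsatE R (polyhedron pos K) V f y.
      move=> i il y yc; apply/(IHf y (pi i) yc).
      case: i il yc => [|i] il yc; first by case: Hp => _ -> _ _ _.
      by apply: Hi.
    have [z [zc [q [cq qP q0 q1 qQ]]]] := path_reach HK xs Hp Qc.
    exists q; split => //; rewrite q1; exact/(IHg z (pi l) zc).
Qed.

Theorem lemma4 (R : realType) (m : nat) (PL : Type) (Vt : finType)
    (pos : Vt -> 'rV[R]_m) (K : {set {set Vt}}) (V : PL -> set 'rV[R]_m) :
  is_simplicial_complex pos K ->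
  polyhedral_valuation pos K V ->
  forall (x : 'rV[R]_m), polyhedron pos K x ->
  forall (s : cellW K), cell pos (sval s) x ->
  forall phi : formE PL,
    tsatE R (polyhedron pos K) V phi x <->
    psatG (@cell_le R m Vt pos K) (cell_val pos V) (enc phi) s.
Proof. by move=> HK HV x _ s xs phi; exact: main_ind. Qed.
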